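(* Let $p\in(0,1)$ and let $Y=[\xi_{ij}]$ be a $p$-robust random 0–1 matrix of size $n\times n$ (with otherwise arbitrary distribution). Then $$\Pr(Y\text{ has a perfect matching})\ge 1-(n+1)^3(1-p)^{\lfloor n/2\rfloor}.$$
   Context: A perfect matching of a 0–1 $n\times n$ matrix $Y$ is a choice of indices $((i_1,1),\dots,(i_n,n))$ with $\{i_1,\dots,i_n\}=\{1,\dots,n\}$ and $\xi_{i_j,j}=1$ for all $j$ (equivalently, a perfect matching of the bipartite graph with bi-adjacency matrix $Y$). In an $n\times n$ matrix, $(i,j)\prec(k,\ell)$ if $i<k$, or $i=k$ and $j<\ell$. $Y$ is $p$-robust if for every $(i,j)$, every set of positions $(i_1,j_1),\dots,(i_r,j_r)\prec(i,j)$ and every $a_1,\dots,a_r\in\{0,1\}$ with the conditioning event of positive probability, $\Pr(\xi_{ij}=1\mid\xi_{i_1j_1}=a_1,\dots,\xi_{i_rj_r}=a_r)\ge p$ (and $\Pr(\xi_{ij}=1)\ge p$). *)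

(* Defs.v *)
From HB Require Import structures.
From mathcomp Require Import all_boot all_order all_algebra all_fingroup.
Set Implicit Arguments. Unset Strict Implicit. Unset Printing Implicit Defensive.
Import Order.TTheory GRing.Theory Num.Theory.
Local Open Scope ring_scope.

(* A random 0-1 n x n matrix is modelled by its distribution: a probability
   mass function on the finite type 'M[bool]_n (entry true = 1, false = 0). *)
Definition is_distribution (R : numDomainType) (n : nat)
  (mu : {ffun 'M[bool]_n -> R}) : Prop :=
  (forall Y, 0 <= mu Y) /\ \sum_Y mu Y = 1.

Definition prob (R : numDomainType) (n : nat) (mu : {ffun 'M[bool]_n -> R})
  (E : pred 'M[bool]_n) : R := \sum_(Y | E Y) mu Y.

Definition prec (n : nat) (u v : 'I_n * 'I_n) : bool :=
  (u.1 < v.1)%N || ((u.1 == v.1) && (u.2 < v.2)%N).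

Definition cond_event (n : nat) (S : {set 'I_n * 'I_n})
  (a : 'I_n * 'I_n -> bool) : pred 'M[bool]_n :=
  fun Y => [forall q in S, Y q.1 q.2 == a q].

Definition p_robust (R : numFieldType) (n : nat) (p : R)
  (mu : {ffun 'M[bool]_n -> R}) : Prop :=
  forall (i j : 'I_n) (S : {set 'I_n * 'I_n}) (a : 'I_n * 'I_n -> bool),
    (forall q, q \in S -> prec q (i, j)) ->
    0 < prob mu (cond_event S a) ->
    p <= prob mu (fun Y => cond_event S a Y && Y i j) / prob mu (cond_event S a).

Definition has_perfect_matching (n : nat) (Y : 'M[bool]_n) : bool :=
  [exists s : 'S_n, [forall j : 'I_n, Y (s j) j]].

(* Main.v *)
Require Import Defs.
From HB Require Import structures.
From mathcomp Require Import all_boot all_order all_algebra all_fingroup.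
From mathcomp Require Import zify ring lra.
Set Implicit Arguments. Unset Strict Implicit. Unset Printing Implicit Defensive.
Import Order.TTheory GRing.Theory Num.Theory.
Section Hall.
Variables (A B : finType) (a0 : A).

Definition nbh (r : B -> A -> bool) (J : {set B}) : {set A} :=
  [set a | [exists j in J, r j a]].

Definition hallc r (C : {set B}) := forall J : {set B}, J \subset C -> #|J| <= #|nbh r J|.

Lemma nbh_sub (r r' : B -> A -> bool) (J : {set B}) : (forall j a, r j a -> r' j a) -> nbh r J \subset nbh r' J.
Proof.
move=> H; apply/subsetP=> a; rewrite !inE => /existsP[j /andP[jJ rja]].
by apply/existsP; exists j; rewrite jJ H.
Qed.

Lemma hall_ind N (r : B -> A -> bool) (C : {set B}) : #|C| <= N -> hallc r C ->
  exists f : B -> A, {in C &, injective f} /\ {in C, forall j, r j (f j)}.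
Proof.
elim: N r C => [|N IH] r C hC hH.
  have C0 : C = set0 by apply/eqP; rewrite -cards_eq0 -leqn0.
  by exists (fun _ => a0); split=> j; rewrite C0 inE.
have [C0|[c cC]] := set_0Vmem C.
  by exists (fun _ => a0); split=> j; rewrite C0 inE.
case: (boolP [exists J : {set B}, [&& J \subset C, J != set0, J != C & #|nbh r J| <= #|J|]]).
- case/existsP=> J0 /and4P[sJ0 J0n J0C tJ0].
  have ltJ0 : #|J0| < #|C| by apply: proper_card; rewrite properEneq J0C.
  have [f0 [inj0 r0]] : exists f : B -> A, {in J0 &, injective f} /\ {in J0, forall j, r j (f j)}.
    apply: (IH r J0); first by lia.
    by move=> J sJ; apply: hH; apply: subset_trans sJ0.
  pose r2 j a := r j a && (a \notin nbh r J0).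
  have [f2 [inj2 r2f]] : exists f : B -> A, {in C :\: J0 &, injective f} /\ {in C :\: J0, forall j, r2 j (f j)}.
    apply: (IH r2 (C :\: J0)).
      rewrite cardsD (setIidPr sJ0).
      have : 0 < #|J0| by rewrite card_gt0.
      have : #|J0| <= #|C| by exact: ltnW.
      move: hC; lia.
    move=> K sK.
    have dKJ : [disjoint K & J0].
      rewrite -setI_eq0; apply/eqP/setP=> x; rewrite !inE.
      case: (boolP (x \in K)) => // xK; move/subsetP: sK => /(_ x xK).
      by rewrite !inE => /andP[/negbTE ->].
    have h1 : #|K :|: J0| = #|K| + #|J0|.
      by apply/eqP; rewrite (leq_card_setU K J0).2.
    have h2 : #|K :|: J0| <= #|nbh r (K :|: J0)|.
      apply: hH; rewrite subUset sJ0 andbT; apply: subset_trans sK _.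
      exact: subsetDl.
    have h3 : nbh r (K :|: J0) \subset nbh r2 K :|: nbh r J0.
      apply/subsetP=> a; rewrite [a \in nbh r _]inE => /existsP[j /andP[]].
      rewrite inE => /orP[jK|jJ] rja; rewrite inE.
        case: (boolP (a \in nbh r J0)) => aN; first by rewrite orbT.
        by apply/orP; left; rewrite inE; apply/existsP; exists j; rewrite jK /r2 rja.
      by apply/orP; right; rewrite inE; apply/existsP; exists j; rewrite jJ.
    have h4 := subset_leq_card h3.
    have h5 := (leq_card_setU (nbh r2 K) (nbh r J0)).1.
    have h6 : #|nbh r J0| <= #|J0| := tJ0.
    lia.
  exists (fun j => if j \in J0 then f0 j else f2 j); split.
    move=> j k jC kC /=.
    case: (boolP (j \in J0)) => jJ; case: (boolP (k \in J0)) => kJ.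
    + exact: inj0.
    + move=> e; have := r2f k; rewrite inE kJ kC => /(_ isT) /andP[_].
      rewrite -e inE; case/existsP; exists j; rewrite jJ; exact: r0.
    + move=> e; have := r2f j; rewrite inE jJ jC => /(_ isT) /andP[_].
      rewrite e inE; case/existsP; exists k; rewrite kJ; exact: r0.
    + by apply: inj2; rewrite inE ?jJ ?kJ.
  move=> j jC /=; case: (boolP (j \in J0)) => jJ; first exact: r0.
  by have := r2f j; rewrite inE jJ jC => /(_ isT) /andP[].
- rewrite negb_exists => /forallP hnt.
  have [a rca] : exists a, r c a.
    have := hH [set c]; rewrite sub1set cC cards1 => /(_ isT).
    rewrite card_gt0 => /set0Pn[a]; rewrite inE => /existsP[j /andP[]].
    by rewrite inE => /eqP -> ?; exists a.
  pose r1 j x := r j x && (x != a).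
  have [f1 [inj1 r1f]] : exists f : B -> A, {in C :\ c &, injective f} /\ {in C :\ c, forall j, r1 j (f j)}.
    apply: (IH r1 (C :\ c)).
      by move: hC; rewrite (cardsD1 c C) cC; lia.
    move=> K sK.
    have [K0|Kn] := eqVneq K set0; first by rewrite K0 cards0.
    have sKC : K \subset C by apply: subset_trans sK (subsetDl _ _).
    have KC : K != C.
      apply/eqP=> KC; move/subsetP: sK => /(_ c); rewrite KC cC !inE eqxx.
      by move=> /(_ isT).
    have := hnt K; rewrite sKC Kn KC /= -ltnNge => h1.
    have h3 : nbh r K \subset nbh r1 K :|: [set a].
      apply/subsetP=> x; rewrite !inE => /existsP[j /andP[jK rjx]].
      case: (eqVneq x a) => xa; first by rewrite orbT.
      by apply/orP; left; apply/existsP; exists j; rewrite jK /r1 rjx xa.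
    have h4 := subset_leq_card h3.
    have h5 := (leq_card_setU (nbh r1 K) [set a]).1.
    rewrite cards1 in h5.
    lia.
  exists (fun j => if j == c then a else f1 j); split.
    move=> j k jC kC /=.
    case: (eqVneq j c) => jc; case: (eqVneq k c) => kc.
    + by rewrite jc kc.
    + move=> e; have := r1f k; rewrite !inE kc kC => /(_ isT) /andP[_].
      by rewrite -e eqxx.
    + move=> e; have := r1f j; rewrite !inE jc jC => /(_ isT) /andP[_].
      by rewrite e eqxx.
    + by apply: inj1; rewrite !inE ?jc ?kc.
  move=> j jC /=; case: (eqVneq j c) => [->//|jc].
  by have := r1f j; rewrite !inE jc jC => /(_ isT) /andP[].
Qed.

End Hall.

Lemma exists_subset (T : finType) (A : {set T}) k : k <= #|A| ->
  exists B : {set T}, B \subset A /\ #|B| = k.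
Proof.
elim: k => [|k IH] hk; first by exists set0; rewrite sub0set cards0.
have [B [BA hB]] := IH (ltnW hk).
have : 0 < #|A :\: B| by rewrite cardsD (setIidPr BA) hB; lia.
rewrite card_gt0 => /set0Pn[x]; rewrite inE => /andP[xB xA].
exists (x |: B); split; first by rewrite subUset sub1set xA BA.
by rewrite cardsU1 xB hB.
Qed.

Lemma noPM_block n (a0 : 'I_n) (Y : 'M[bool]_n) : ~~ has_perfect_matching Y ->
  exists J : {set 'I_n}, exists I : {set 'I_n},
    #|I| = (n.+1 - #|J|)%N /\ cond_event (setX I J) (fun _ => false) Y.
Proof.
move=> hY.
pose r := fun (j i : 'I_n) => (Y i j : bool).
case: (boolP [exists J : {set 'I_n}, #|nbh r J| < #|J|]).
  case/existsP=> J hJ; exists J.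
  have hC := cardsC (nbh r J); rewrite card_ord in hC.
  have [I [sI hI]] := exists_subset (A := ~: nbh r J) (k := n.+1 - #|J|) ltac:(lia).
  exists I; split => //.
  rewrite /cond_event; apply/forallP=> -[i j]; apply/implyP; rewrite inE /= => /andP[iI jJ].
  move/subsetP: sI => /(_ i iI); rewrite !inE; apply: contraNT => Yij.
  by apply/existsP; exists j; rewrite jJ /r; move: Yij; case: (Y i j).
rewrite negb_exists => /forallP hH.
have [f [finj fr]] := @hall_ind _ _ a0 #|[set: 'I_n]| r [set: 'I_n] (leqnn _)
  (fun J _ => ltac:(by have := hH J; rewrite -leqNgt)).
have inj : injective f by move=> x y; apply: finj; rewrite inE.
case/negP: hY; apply/existsP; exists (perm inj); apply/forallP => j.
by rewrite permE; apply: (fr j); rewrite inE.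
Qed.

Local Open Scope ring_scope.

Lemma bin_le_exp n k : ('C(n, k) <= n ^ k)%N.
Proof.
elim: n k => [|n IH] [|k] //.
rewrite binS.
have h1 := IH k.+1; have h2 := IH k.
have h3 : (n ^ k <= n.+1 ^ k)%N.
  by case: k {h1 h2} => [//|k]; rewrite leq_exp2r.
have h4 := leq_mul h3 (leqnn n.+1).
move: h1 h2 h3 h4; rewrite !expnS; set a := (n ^ k)%N; set b := (n.+1 ^ k)%N; nia.
Qed.

Lemma sum_card (R : nmodType) n (G : nat -> R) :
  \sum_(J : {set 'I_n}) G #|J| = \sum_(k < n.+1) G k *+ 'C(n, k).
Proof.
rewrite (partition_big (fun J : {set 'I_n} => (inord #|J| : 'I_n.+1)) xpredT) //=.
apply: eq_bigr => k _.
have hJ : forall J : {set 'I_n}, (#|J| <= n)%N.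
  by move=> J; rewrite -[X in (_ <= X)%N](card_ord n) max_card.
rewrite (eq_bigl (mem [set J : {set 'I_n} | #|J| == k])); last first.
  by move=> J; rewrite !inE /= -val_eqE /= inordK ?ltnS.
rewrite (eq_bigr (fun _ => G k)); last first.
  by move=> J HJ; move: HJ; rewrite !inE => /eqP ->.
by rewrite sumr_const card_draws card_ord.
Qed.


Lemma nat_part n k : (1 <= k <= n)%N -> exists j,
  [/\ (1 <= j)%N, ('C(n, k) * 'C(n, n.+1 - k) <= (n ^ 2) ^ j)%N & (j * n./2 <= (n.+1 - k) * k)%N].
Proof.
move=> /andP[k1 kn].
have hm := odd_double_half n.
set m := n./2 in hm *.
set l := (n.+1 - k)%N.
have hl : (k + l = n.+1)%N by rewrite /l; lia.
have n1 : (0 < n)%N by lia.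
have hmul : forall a b, (a <= b)%N -> (n ^ a <= n ^ b)%N.
  by move=> a b ab; apply: leq_pexp2l.
have sq : forall j, ((n ^ 2) ^ j = n ^ j * n ^ j)%N.
  by move=> j; rewrite -expnM mulnC expnM expnS expn1.
case: (leqP k l) => kl.
  exists k; split => //.
    have e : 'C(n, l) = 'C(n, k.-1).
      rewrite -bin_sub; last by lia.
      by congr 'C(_, _); lia.
    rewrite e sq; apply: leq_mul; first exact: bin_le_exp.
    apply: leq_trans (bin_le_exp _ _) _; apply: hmul; lia.
  rewrite mulnC; apply: leq_mul => //.
  move: hm; rewrite -muln2; case: (odd n); lia.
exists l; split => //.
- lia.
- have e : 'C(n, k) = 'C(n, l.-1).
    rewrite -bin_sub; last by lia.
    by congr 'C(_, _); lia.
  rewrite e sq mulnC; apply: leq_mul; first exact: bin_le_exp.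
  apply: leq_trans (bin_le_exp _ _) _; apply: hmul; lia.
- apply: leq_mul => //.
  move: hm; rewrite -muln2; case: (odd n); lia.
Qed.

Lemma term_bound (R : realFieldType) n (q : R) k : 0 <= q -> q <= 1 ->
  (n ^ 2)%:R * q ^+ n./2 <= 1 -> (k <= n)%N ->
  q ^+ ((n.+1 - k) * k) *+ ('C(n, k) * 'C(n, n.+1 - k)) <= (n ^ 2)%:R * q ^+ n./2.
Proof.
move=> q0 q1 x1 kn.
have x0 : 0 <= (n ^ 2)%:R * q ^+ n./2 by rewrite mulr_ge0 ?exprn_ge0.
case: (posnP k) => [->|k1].
  by rewrite subn0 (bin_small (ltnSn n)) !muln0 mulr0n.
have [j [j1 hC hE]] := nat_part (n := n) (k := k) ltac:(lia).
rewrite -mulr_natr.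
apply: (le_trans (y := q ^+ (j * n./2) * ((n ^ 2) ^ j)%:R)).
  apply: ler_pM; rewrite ?exprn_ge0 ?ler0n //.
    by apply: ler_wiXn2l.
  by rewrite ler_nat.
rewrite natrX mulrC exprM exprAC -exprMn.
case: j j1 {hC hE} => [//|j] _.
rewrite exprS; rewrite -[X in _ <= X]mulr1; apply: ler_wpM2l => //.
exact: exprn_ile1.
Qed.

Section Prob.
Variables (R : realFieldType) (n : nat) (p : R) (mu : {ffun 'M[bool]_n -> R}).
Hypothesis mu_ge0 : forall Y, 0 <= mu Y.

Lemma prob_ge0 E : 0 <= prob mu E.
Proof. by apply: sumr_ge0 => Y _; apply: mu_ge0. Qed.

Lemma prob_mono (E F : pred 'M[bool]_n) : (forall Y, E Y -> F Y) -> prob mu E <= prob mu F.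
Proof.
move=> H; rewrite /prob [X in _ <= X](bigID E) /=.
rewrite (eq_bigl E); last by move=> Y; case: (boolP (E Y)) => [EY|]; rewrite ?andbF ?(H _ EY).
by rewrite lerDl sumr_ge0.
Qed.

Lemma prob_split (E : pred 'M[bool]_n) (b : pred 'M[bool]_n) :
  prob mu E = prob mu (fun Y => E Y && b Y) + prob mu (fun Y => E Y && ~~ b Y).
Proof. by rewrite /prob (bigID b). Qed.

Lemma prob_ext (E F : pred 'M[bool]_n) : (forall Y, E Y = F Y) -> prob mu E = prob mu F.
Proof. by move=> H; apply: eq_bigl. Qed.

Definition rk (q : 'I_n * 'I_n) : nat := (q.1 * n + q.2)%N.

Lemma rk_prec u v : (rk u < rk v)%N -> prec u v.
Proof.
rewrite /rk /prec => h.
have := ltn_ord u.2; have := ltn_ord v.2.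
case: (ltngtP u.1 v.1) => // ac.
  have : (v.1 * n + n <= u.1 * n)%N by rewrite -mulSnr leq_mul2r ac orbT.
  lia.
have e : u.1 == v.1 by apply/eqP/val_inj.
rewrite e /=; move: h; rewrite ac; lia.
Qed.

Lemma rk_inj : injective rk.
Proof.
move=> u v; rewrite /rk => h.
have h1 := ltn_ord u.2; have h2 := ltn_ord v.2.
have e1 : u.1 = v.1.
  apply: val_inj; case: (ltngtP u.1 v.1) => // ac.
    have : (u.1 * n + n <= v.1 * n)%N by rewrite -mulSnr leq_mul2r ac orbT.
    lia.
  have : (v.1 * n + n <= u.1 * n)%N by rewrite -mulSnr leq_mul2r ac orbT.
  lia.
move: h; rewrite e1 => h.
have e2 : u.2 = v.2 by apply: val_inj => /=; lia.
by case: u v e1 e2 {h h1 h2} => [? ?] [? ?] /= -> ->.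
Qed.

Hypothesis hR : p_robust p mu.
Hypothesis hp1 : p <= 1.

Definition ff (q : 'I_n * 'I_n) := false.

Hypothesis hsum : \sum_Y mu Y = 1.

Lemma prob_le1 E : prob mu E <= 1.
Proof.
rewrite -hsum; have -> : \sum_Y mu Y = prob mu predT by [].
by apply: prob_mono.
Qed.

Lemma zero_block k (T : {set 'I_n * 'I_n}) : #|T| = k ->
  prob mu (cond_event T ff) <= (1 - p) ^+ k.
Proof.
elim: k T => [|k IH] T hT; first by rewrite expr0 prob_le1.
have : (0 < #|T|)%N by rewrite hT.
rewrite card_gt0 => /set0Pn[t0 t0T].
case: (arg_maxnP rk t0T) => t tT0 tmax.
have tT : t \in T := tT0.
set T' := T :\ t.
have hT' : #|T'| = k by move: hT; rewrite (cardsD1 t T) tT add1n => -[].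
have Hprec : forall q, q \in T' -> prec q (t.1, t.2).
  move=> q; rewrite !inE => /andP[qt qT]; rewrite -surjective_pairing.
  apply: rk_prec; rewrite ltn_neqAle; have -> : (rk q <= rk t)%N := tmax q qT; rewrite andbT.
  by apply: contra qt => /eqP /rk_inj ->.
have E1 : forall Y, cond_event T ff Y = cond_event T' ff Y && ~~ Y t.1 t.2.
  move=> Y; apply/forallP/andP => [H|[/forallP H1 Ht] q].
    split; last by have := H t; rewrite tT /= eqbF_neg.
    by apply/forallP => q; apply/implyP => qT'; have := H q; rewrite (subsetP (subD1set T t) q qT').
  apply/implyP => qT; case: (eqVneq q t) => [->|qt]; first by rewrite eqbF_neg.
  by have := H1 q; rewrite !inE qt qT.
rewrite (prob_ext E1) exprS.
have hs := prob_split (cond_event T' ff) (fun Y => Y t.1 t.2).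
have hb := IH T' hT'.
have [P0|Ppos] := eqVneq (prob mu (cond_event T' ff)) 0.
  have : prob mu (fun Y => cond_event T' ff Y && ~~ Y t.1 t.2) <= prob mu (cond_event T' ff).
    by apply: prob_mono => Y /andP[].
  rewrite P0 => h; apply: (le_trans h).
  by rewrite mulr_ge0 ?exprn_ge0 // subr_ge0.
have Pp : 0 < prob mu (cond_event T' ff) by rewrite lt_def Ppos prob_ge0.
have H := hR Hprec Pp; rewrite ler_pdivlMr // in H.
have h2 : (1 - p) * prob mu (cond_event T' ff) <= (1 - p) * (1 - p) ^+ k.
  by apply: ler_wpM2l; rewrite // subr_ge0.
move: hs H h2.
set a := prob mu (cond_event T' ff).
set b := prob mu (fun Y => cond_event T' ff Y && Y t.1 t.2).
set c := prob mu _.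
set e := (1 - p) ^+ k.
move=> hs H h2; nra.
Qed.
End Prob.


Lemma single_le_sum (R : numDomainType) (I : finType) (P : pred I) (F : I -> R) i :
  P i -> (forall j, P j -> 0 <= F j) -> F i <= \sum_(j | P j) F j.
Proof.
move=> Pi h; rewrite (bigD1 i) //= lerDl; apply: sumr_ge0 => j /andP[Pj _].
exact: h.
Qed.

Theorem theorem5 (R : realFieldType) (n : nat) (p : R)
  (mu : {ffun 'M[bool]_n -> R}) :
  0 < p < 1 ->
  is_distribution mu ->
  p_robust p mu ->
  1 - (n.+1)%:R ^+ 3 * (1 - p) ^+ (n./2) <= prob mu (@has_perfect_matching n).
Proof.
move=> /andP[p0 p1] [mu0 musum] hR.
have [n0|npos] := posnP n.
  subst n; rewrite expr1n expr0 mulr1 subrr.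
  exact: prob_ge0.
pose a0 : 'I_n := Ordinal npos.
pose NP := fun Y : 'M[bool]_n => ~~ has_perfect_matching Y.
have hsplit := prob_split mu (predT : pred 'M[bool]_n) (@has_perfect_matching n).
have htot : prob mu predT = 1 by [].
have -> : prob mu (@has_perfect_matching n) = 1 - prob mu NP.
  by rewrite -htot hsplit; rewrite addrK.
rewrite lerD2l lerN2.
set q := 1 - p.
have q0 : 0 <= q by rewrite subr_ge0 ltW.
have q1 : q <= 1 by rewrite lerBlDr lerDl ltW.
have qm0 : 0 <= q ^+ n./2 by rewrite exprn_ge0.
have hn2 : (n ^ 2)%:R <= (n.+1)%:R ^+ 3 :> R.
  rewrite -natrX ler_nat; apply: (@leq_trans (n.+1 ^ 2)).
    by rewrite leq_exp2r.
  by apply: leq_pexp2l.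
case: (leP ((n ^ 2)%:R * q ^+ n./2) 1) => hx; last first.
  apply: (le_trans (prob_le1 mu0 musum NP)); apply: (le_trans (ltW hx)).
  by apply: ler_wpM2r.
have hU : prob mu NP <= \sum_(J : {set 'I_n}) \sum_(I : {set 'I_n} | #|I| == (n.+1 - #|J|)%N)
    prob mu (cond_event (setX I J) (@ff n)).
  rewrite /prob big_mkcond /=.
  apply: (le_trans (y := \sum_Y \sum_(J : {set 'I_n}) \sum_(I : {set 'I_n} | #|I| == (n.+1 - #|J|)%N)
      (if cond_event (setX I J) (@ff n) Y then mu Y else 0))).
    apply: ler_sum => Y _.
    have hnn : forall J I, 0 <= (if cond_event (setX I J) (@ff n) Y then mu Y else 0 : R).
      by move=> J I; case: ifP.
    case: ifP => [hY|_]; last first.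
      by apply: sumr_ge0 => J _; apply: sumr_ge0 => I _.
    have [J [I [hI hE]]] := noPM_block a0 hY.
    apply: (le_trans _ (single_le_sum (P := xpredT) (i := J) _ _)) => //; last first.
      by move=> J' _; apply: sumr_ge0 => I' _.
    apply: (le_trans _ (single_le_sum (i := I) _ _)) => //; last by rewrite hI.
    by rewrite hE.
  rewrite exchange_big /=; apply: ler_sum => J _.
  rewrite exchange_big /=; apply: ler_sum => I _.
  by rewrite [X in _ <= X]big_mkcond.
apply: (le_trans hU).
apply: (le_trans (y := \sum_(J : {set 'I_n}) \sum_(I : {set 'I_n} | #|I| == (n.+1 - #|J|)%N)
    q ^+ ((n.+1 - #|J|) * #|J|))).
  apply: ler_sum => J _; apply: ler_sum => I /eqP hI.
  rewrite -hI -cardsX; exact: zero_block mu0 hR (ltW p1) musum _ _ erefl.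
apply: (le_trans (y := \sum_(J : {set 'I_n}) q ^+ ((n.+1 - #|J|) * #|J|) *+ 'C(n, n.+1 - #|J|))).
  apply: ler_sum => J _.
  rewrite (eq_bigl (mem [set I : {set 'I_n} | #|I| == (n.+1 - #|J|)%N])); last first.
    by move=> I; rewrite !inE.
  by rewrite sumr_const card_draws card_ord.
rewrite (sum_card n (fun k : nat => q ^+ ((n.+1 - k) * k) *+ 'C(n, n.+1 - k))).
apply: (le_trans (y := \sum_(k < n.+1) (n ^ 2)%:R * q ^+ n./2)).
  apply: ler_sum => k _.
  rewrite -mulrnA (mulnC 'C(n, n.+1 - k)); apply: term_bound => //.
  by rewrite -ltnS.
rewrite sumr_const card_ord -mulrnAl.
apply: ler_wpM2r => //.
rewrite -!natrX -mulrnA ler_nat.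
have h := leq_exp2r n n.+1 (isT : (0 < 2)%N); by rewrite (expnS n.+1 2) mulnC leq_mul2l h leqnSn orbT.
Qed.
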